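(* Consider a $K$-armed bandit with reward vector $r\in[0,1]^K$ having distinct entries, $V^*=\max_a r(a)$, any temperature $\eta\in(0,\infty)$, and the discrete DG update $\theta_{t+1}(a)=\theta_t(a)+\alpha w_t(a)U_t(a)$ with sufficiently small step size $\alpha>0$ (as required for $\pi_{\theta_t}$ to converge to the optimal one-hot policy). Then $\delta_t:=V^*-\pi_{\theta_t}^\top r=O(1/t)$.
   Context: Softmax policy $\pi_\theta(a)=e^{\theta(a)}/\sum_{a'}e^{\theta(a')}$; $\pi_t=\pi_{\theta_t}$; $U_t(a):=r(a)-\pi_t^\top r$, $\ell_t(a):=-\log\pi_t(a)$, $w_t(a):=\sigma(U_t(a)\ell_t(a)/\eta)$ with $\sigma(x)=1/(1+e^{-x})$. *)

(* Defs.v *)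
From mathcomp Require Import all_boot all_order all_algebra.
From mathcomp Require Import all_classical all_reals all_analysis.
Set Implicit Arguments. Unset Strict Implicit. Unset Printing Implicit Defensive.
Import Order.TTheory GRing.Theory Num.Theory.
Local Open Scope ring_scope.

Section DG.
Variables (R : realType) (K : nat).

Definition softmax (theta : 'I_K -> R) (a : 'I_K) : R :=
  expR (theta a) / \sum_(b < K) expR (theta b).

Definition value (theta : 'I_K -> R) (r : 'I_K -> R) : R :=
  \sum_(b < K) softmax theta b * r b.

(* V^* = max_a r(a) (r is nonnegative and K > 0 in the theorem, so this is
   the true maximum) *)
Definition Vstar (r : 'I_K -> R) : R := \big[Num.max/0]_(a < K) r a.

Definition sigmoid (x : R) : R := 1 / (1 + expR (- x)).

Definition adv (r : 'I_K -> R) (theta : 'I_K -> R) (a : 'I_K) : R :=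
  r a - value theta r.
Definition ell (theta : 'I_K -> R) (a : 'I_K) : R := - ln (softmax theta a).
Definition wgt (eta : R) (r : 'I_K -> R) (theta : 'I_K -> R) (a : 'I_K) : R :=
  sigmoid (adv r theta a * ell theta a / eta).

Fixpoint dg_theta (alpha eta : R) (r : 'I_K -> R) (theta0 : 'I_K -> R)
    (t : nat) : 'I_K -> R :=
  match t with
  | O => theta0
  | S t' => let th := dg_theta alpha eta r theta0 t' in
            fun a => th a + alpha * wgt eta r th a * adv r th a
  end.

Definition delta (alpha eta : R) (r : 'I_K -> R) (theta0 : 'I_K -> R)
    (t : nat) : R :=
  Vstar r - value (dg_theta alpha eta r theta0 t) r.

End DG.

(* Main.v *)
Require Import Defs.
From mathcomp Require Import all_boot all_order all_algebra.
From mathcomp Require Import all_classical all_reals all_analysis.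
From mathcomp Require Import ring lra.
Import Order.TTheory GRing.Theory Num.Theory.
Local Open Scope ring_scope.

Lemma Vstar_arg (R : realType) (K : nat) (r : 'I_K -> R) :
  (0 < K)%N -> (forall a, 0 <= r a) ->
  exists a0, Vstar r = r a0 /\ forall b, r b <= r a0.
Proof.
move=> K0 r0; pose i0 := Ordinal K0.
exists [arg max_(i > i0) r i]%O; split.
  by rewrite /Vstar (bigmax_eq_arg 0 i0) //.
case: arg_maxP => //= i _ H b; exact: H.
Qed.

Lemma sum_exp_gt0 (R : realType) (K : nat) (th : 'I_K -> R) :
  (0 < K)%N -> 0 < \sum_(b < K) expR (th b).
Proof.
move=> K0; rewrite (bigD1 (Ordinal K0)) //=.
by apply: ltr_pwDl; [exact: expR_gt0| apply: sumr_ge0 => i _; exact: ltW (expR_gt0 _)].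
Qed.

Lemma softmax_gt0 (R : realType) (K : nat) (th : 'I_K -> R) a :
  0 < softmax th a.
Proof.
have K0 : (0 < K)%N := leq_ltn_trans (leq0n a) (ltn_ord a).
by rewrite /softmax divr_gt0 // ?expR_gt0 // sum_exp_gt0.
Qed.

Lemma sum_softmax (R : realType) (K : nat) (th : 'I_K -> R) :
  (0 < K)%N -> \sum_(b < K) softmax th b = 1.
Proof.
move=> K0; rewrite /softmax -mulr_suml divff //; exact/lt0r_neq0/sum_exp_gt0.
Qed.

Lemma softmax_le1 (R : realType) (K : nat) (th : 'I_K -> R) a :
  softmax th a <= 1.
Proof.
have K0 : (0 < K)%N := leq_ltn_trans (leq0n a) (ltn_ord a).
rewrite -(@sum_softmax R K th K0) (bigD1 a) //= lerDl.
by apply: sumr_ge0 => i _; exact: ltW (softmax_gt0 _ _ _ _).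
Qed.

Lemma sigmoid_gt0 (R : realType) (x : R) : 0 < sigmoid x.
Proof. by rewrite /sigmoid divr_gt0 // addr_gt0 // expR_gt0. Qed.

Lemma sigmoid_le1 (R : realType) (x : R) : sigmoid x <= 1.
Proof.
rewrite /sigmoid ler_pdivrMr ?addr_gt0 ?expR_gt0 // mul1r lerDl.
exact: ltW (expR_gt0 _).
Qed.

Lemma sigmoid_ge_half (R : realType) (x : R) : 0 <= x -> 1/2 <= sigmoid x.
Proof.
move=> x0; rewrite /sigmoid ler_pdivlMr ?addr_gt0 ?expR_gt0 //.
have : expR (- x) <= 1 by rewrite -expR0 ler_expR lerNl oppr0.
lra.
Qed.

Lemma sigmoid_le (R : realType) (x y : R) : x <= y -> sigmoid x <= sigmoid y.
Proof.
move=> xy; rewrite /sigmoid ler_pdivrMr ?addr_gt0 ?expR_gt0 //.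
rewrite mulrAC ler_pdivlMr ?addr_gt0 ?expR_gt0 // !mul1r lerD2l ler_expR lerN2 //.
Qed.

Lemma value_ge0 (R : realType) (K : nat) (th r : 'I_K -> R) :
  (forall a, 0 <= r a) -> 0 <= value th r.
Proof.
move=> r0; apply: sumr_ge0 => b _; apply: mulr_ge0 => //; exact: ltW (softmax_gt0 _ _ _ _).
Qed.

Lemma value_le (R : realType) (K : nat) (th r : 'I_K -> R) (M : R) :
  (0 < K)%N -> (forall a, r a <= M) -> value th r <= M.
Proof.
move=> K0 rM; rewrite /value -[X in _ <= X]mul1r -(@sum_softmax R K th K0) mulr_suml.
apply: ler_sum => b _; apply: ler_wpM2l => //; exact: ltW (softmax_gt0 _ _ _ _).
Qed.

Lemma term_ge0 (R : realType) (d u : R) : 0 <= d * u -> 0 <= (expR d - 1) * u.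
Proof.
move=> h; case: (ltrgtP d 0) => [dn|dp|->]; last by rewrite expR0 subrr mul0r.
- have un : u <= 0 by move: h; rewrite nmulr_rge0.
  have : expR d < 1 by rewrite -expR0 ltr_expR.
  move=> e1; apply: mulr_le0 => //; lra.
- have up : 0 <= u by move: h; rewrite pmulr_rge0.
  have : 1 < expR d by rewrite -expR0 ltr_expR.
  move=> e1; apply: mulr_ge0 => //; lra.
Qed.

Lemma value_step (R : realType) (K : nat) (r th d : 'I_K -> R) (s : 'I_K) :
  (0 < K)%N -> (forall b, 0 <= d b * adv r th b) -> (forall b, d b <= 1) ->
  softmax th s * (expR (d s) - 1) * adv r th s / expR 1
    <= value (fun a => th a + d a) r - value th r.
Proof.
move=> K0 hd d1.
set pi := softmax th; set V := value th r.
set Z := \sum_(b < K) pi b * expR (d b).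
have pi0 : forall b, 0 < pi b by move=> b; exact: softmax_gt0.
have Z0 : 0 < Z.
  rewrite /Z (bigD1 (Ordinal K0)) //=; apply: ltr_pwDl.
    by rewrite mulr_gt0 // expR_gt0.
  by apply: sumr_ge0 => i _; rewrite mulr_ge0 // ltW // expR_gt0.
have Ze : Z <= expR 1.
  rewrite -[X in _ <= X]mul1r -{1}(@sum_softmax R K th K0) mulr_suml.
  apply: ler_sum => b _; apply: ler_wpM2l; first exact: ltW (pi0 b).
  by rewrite ler_expR.
have S0 : 0 < \sum_(b < K) expR (th b) by exact: sum_exp_gt0.
have eS : \sum_(b < K) expR (th b + d b) = (\sum_(b < K) expR (th b)) * Z.
  rewrite /Z mulr_sumr; apply: eq_bigr => b _; rewrite expRD /pi /softmax.
  field; exact: lt0r_neq0.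
have esm : forall b, softmax (fun a => th a + d a) b = pi b * expR (d b) / Z.
  move=> b; rewrite /softmax eS /pi /softmax.
rewrite expRD; field.
  by apply/andP; split; exact: lt0r_neq0.
set N := \sum_(b < K) pi b * (expR (d b) - 1) * adv r th b.
have eN : N = \sum_(b < K) pi b * expR (d b) * r b - V * Z - V
             + V * \sum_(b < K) pi b.
  rewrite /N (eq_bigr (fun b => pi b * expR (d b) * r b - V * (pi b * expR (d b))
        - pi b * r b + V * pi b)); last by move=> b _; rewrite /adv -/V; ring.
  by rewrite !big_split /= !sumrN -!mulr_sumr.
have ev : value (fun a => th a + d a) r = (\sum_(b < K) pi b * expR (d b) * r b) / Z.
  rewrite /value mulr_suml; apply: eq_bigr => b _; rewrite esm; field.
  exact: lt0r_neq0.
have diff : value (fun a => th a + d a) r - V = N / Z.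
  rewrite ev eN (@sum_softmax R K th K0) mulr1; field; exact: lt0r_neq0.
have Nge : pi s * (expR (d s) - 1) * adv r th s <= N.
  rewrite /N (bigD1 s) //= lerDl; apply: sumr_ge0 => b _.
  rewrite -mulrA; apply: mulr_ge0; [exact: ltW | exact: term_ge0].
have N0 : 0 <= pi s * (expR (d s) - 1) * adv r th s.
  rewrite -mulrA; apply: mulr_ge0; [exact: ltW | exact: term_ge0].
rewrite diff; apply: (@le_trans _ _ (pi s * (expR (d s) - 1) * adv r th s / Z)).
  apply: ler_wpM2l => //; rewrite lef_pV2 ?posrE ?expR_gt0 //.
by apply: ler_wpM2r => //; rewrite invr_ge0 ltW.
Qed.

Lemma rec_bound (R : realType) (x : nat -> R) (c : R) :
  0 < c -> c <= 1 -> (forall t, 0 <= x t <= 1) ->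
  (forall t, x t.+1 <= x t - c * x t ^+ 2) ->
  forall t, x t <= c^-1 / t.+1%:R.
Proof.
move=> c0 c1 xb xs.
have key : forall t, c * x t * t.+1%:R <= 1.
  elim=> [|t IH].
    have := xb 0%N; rewrite mulr1; move=> /andP[h0 h1]; nra.
  have n0 : 0 < t.+1%:R :> R by rewrite ltr0n.
  have := xs t; have := xb t; have := xb t.+1.
  rewrite -[t.+2]addn1 natrD.
  set n := t.+1%:R; set y := x t; set y' := x t.+1.
  move=> /andP[y'0 y'1] /andP[y0 y1] hs.
  have cy1 : c * y <= 1 by nra.
  case: (lerP (c * y * (n + 1)) 1) => hy.
    have : c * y' <= c * y by nra.
    nra.
  have h1 : c * y' * (n + 1) <= c * y * (1 - c * y) * (n + 1).
    have hcn : 0 <= c * (n + 1) by apply: mulr_ge0; lra.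
    have := ler_wpM2l hcn hs.
    rewrite (_ : c * (n + 1) * y' = c * y' * (n + 1)); last by ring.
    rewrite (_ : c * (n + 1) * (y - c * y ^+ 2) = c * y * (1 - c * y) * (n + 1)) //.
    ring.
  have h2 : c * y * (1 - c * y) * (n + 1) <= 1.
    have h3 : (1 - c * y) * (n + 1) <= n.
      rewrite mulrBl mul1r; lra.
    have cy0 : 0 <= c * y by nra.
    have := ler_wpM2l cy0 h3; rewrite mulrA => h4; exact: le_trans h4 IH.
  lra.
move=> t; have n0 : 0 < t.+1%:R :> R by rewrite ltr0n.
rewrite ler_pdivlMr // -[c^-1]mulr1 ler_pdivlMl // mulrA; exact: key.
Qed.
Set Implicit Arguments. Unset Strict Implicit.

Lemma adv_s_ge0 (R : realType) (K : nat) (r th : 'I_K -> R) (s : 'I_K) :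
  (forall b, r b <= r s) -> 0 <= adv r th s.
Proof.
move=> hs; have K0 : (0 < K)%N := leq_ltn_trans (leq0n s) (ltn_ord s).
rewrite /adv subr_ge0; exact: value_le.
Qed.

Lemma adv_bnd (R : realType) (K : nat) (r th : 'I_K -> R) (b : 'I_K) :
  (forall a, 0 <= r a <= 1) -> -1 <= adv r th b <= 1.
Proof.
move=> hr; have K0 : (0 < K)%N := leq_ltn_trans (leq0n b) (ltn_ord b).
have v0 : 0 <= value th r by apply: value_ge0 => a; case/andP: (hr a).
have v1 : value th r <= 1 by apply: value_le => // a; case/andP: (hr a).
case/andP: (hr b) => h0 h1; rewrite /adv; apply/andP; split; lra.
Qed.

Lemma ell_ge0 (R : realType) (K : nat) (th : 'I_K -> R) a : 0 <= ell th a.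
Proof. by rewrite /ell oppr_ge0 ln_le0 // softmax_le1. Qed.

Lemma wgt_s (R : realType) (K : nat) (r th : 'I_K -> R) (eta : R) (s : 'I_K) :
  (forall b, r b <= r s) -> 0 < eta -> 1/2 <= wgt eta r th s.
Proof.
move=> hs e0; apply: sigmoid_ge_half; apply: divr_ge0; last exact: ltW.
apply: mulr_ge0; [exact: adv_s_ge0 | exact: ell_ge0].
Qed.

Lemma wgt_bnd (R : realType) (K : nat) (r th : 'I_K -> R) (eta : R) b :
  0 <= wgt eta r th b <= 1.
Proof. by rewrite /wgt ltW ?sigmoid_gt0 ?sigmoid_le1. Qed.

Definition step (R : realType) (K : nat) (alpha eta : R) (r th : 'I_K -> R) :=
  fun a => th a + alpha * wgt eta r th a * adv r th a.

Lemma step_value (R : realType) (K : nat) (alpha eta : R) (r th : 'I_K -> R) s :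
  (forall a, 0 <= r a <= 1) -> (forall b, r b <= r s) -> 0 < eta ->
  0 < alpha -> alpha <= 1 ->
  softmax th s * alpha * adv r th s ^+ 2 / (2 * expR 1)
    <= value (step alpha eta r th) r - value th r.
Proof.
move=> hr hs e0 a0 a1.
have K0 : (0 < K)%N := leq_ltn_trans (leq0n s) (ltn_ord s).
have := @value_step R K r th (fun b => alpha * wgt eta r th b * adv r th b) s K0.
move=> H; apply: le_trans (H _ _); last first.
- move=> b; have := adv_bnd th b hr; have := wgt_bnd r th eta b.
  move=> /andP[w0 w1] /andP[u0 u1].
  have h1 : wgt eta r th b * adv r th b <= 1.
    by have := ler_wpM2l w0 u1; rewrite mulr1; lra.
  rewrite -mulrA; case: (lerP 0 (wgt eta r th b * adv r th b)) => h.
    by have := ler_wpM2r h a1; rewrite mul1r; lra.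
  by apply: ltW; apply: lt_le_trans (_ : 0 <= 1) => //; rewrite pmulr_rlt0.
- move=> b; have := wgt_bnd r th eta b => /andP[w0 w1].
  rewrite -mulrA; apply: mulr_ge0; first by apply: mulr_ge0 => //; exact: ltW.
  rewrite -expr2; exact: sqr_ge0.
have ws := wgt_s th hs e0; have us := adv_s_ge0 th hs.
set w := wgt eta r th s in ws *; set u := adv r th s in us *.
have ed := expR_ge1Dx (alpha * w * u).
have p0 : 0 < softmax th s by exact: softmax_gt0.
have E0 : 0 < expR 1 :> R by exact: expR_gt0.
have hE : alpha * u / 2 <= expR (alpha * w * u) - 1.
  apply: le_trans (_ : alpha * w * u <= _); last lra.
  have := ler_wpM2l (mulr_ge0 (ltW a0) us) ws; lra.
have en : expR 1 != 0 :> R by exact: lt0r_neq0.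
rewrite (_ : softmax th s * alpha * u ^+ 2 / (2 * expR 1) =
   (softmax th s * u / expR 1) * (alpha * u / 2)); last by field.
rewrite (_ : softmax th s * (expR (alpha * w * u) - 1) * u / expR 1 =
   (softmax th s * u / expR 1) * (expR (alpha * w * u) - 1)); last by field.
apply: ler_wpM2l => //; apply: divr_ge0; [apply: mulr_ge0 => //; exact: ltW | exact: ltW].
Qed.

Lemma dstep_le (R : realType) (K : nat) (alpha eta : R) (r th : 'I_K -> R) b :
  (forall a, 0 <= r a <= 1) -> 0 < alpha ->
  alpha * wgt eta r th b * adv r th b <= alpha.
Proof.
move=> hr a0; have := adv_bnd th b hr; have := wgt_bnd r th eta b.
move=> /andP[w0 w1] /andP[u0 u1].
have h1 : wgt eta r th b * adv r th b <= 1.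
  by have := ler_wpM2l w0 u1; rewrite mulr1; lra.
by rewrite -mulrA; have := ler_wpM2l (ltW a0) h1; rewrite mulr1.
Qed.

Lemma lin_aux (R : realType) (alpha x y p q : R) : 0 <= x -> y <= alpha ->
  (p - q - alpha <= p + x - (q + y)) /\ (y <= x -> p - q <= p + x - (q + y)).
Proof. by move=> hx hy; split; [lra | move=> hxy; lra]. Qed.

Lemma mul_aux (R : realType) (a x y z w : R) : 0 <= a -> x * y <= z * w ->
  a * x * y <= a * z * w.
Proof. by move=> a0 h; rewrite -!mulrA; exact: ler_wpM2l. Qed.

Lemma step_D (R : realType) (K : nat) (alpha eta : R) (r th : 'I_K -> R) s b :
  (forall a, 0 <= r a <= 1) -> (forall b, r b <= r s) -> 0 < eta ->
  0 < alpha ->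
  th s - th b - alpha <= step alpha eta r th s - step alpha eta r th b /\
  (th s - th b <= 0 -> th s - th b <= step alpha eta r th s - step alpha eta r th b).
Proof.
move=> hr hs e0 a0; rewrite /step.
have ds0 : 0 <= alpha * wgt eta r th s * adv r th s.
  apply: mulr_ge0; last exact: adv_s_ge0.
  by apply: mulr_ge0; [exact: ltW | case/andP: (wgt_bnd r th eta s)].
have db := dstep_le eta th b hr a0.
have [g1 g2] := lin_aux (th s) (th b) ds0 db.
split; first exact: g1.
move=> hD; apply: g2.
case: (lerP (adv r th b) 0) => hu.
  apply: le_trans ds0; rewrite -mulrA; apply: mulr_ge0_le0; first exact: ltW.
  by apply: mulr_ge0_le0 => //; case/andP: (wgt_bnd r th eta b).
have K0 : (0 < K)%N := leq_ltn_trans (leq0n s) (ltn_ord s).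
have psb : softmax th s <= softmax th b.
  rewrite /softmax; apply: ler_wpM2r; first by rewrite invr_ge0 ltW // sum_exp_gt0.
  by rewrite ler_expR -subr_le0.
have el : ell th b <= ell th s.
  by rewrite /ell lerN2 ler_ln // posrE softmax_gt0.
have ub : adv r th b <= adv r th s by rewrite /adv lerD2r.
have hw : wgt eta r th b <= wgt eta r th s.
  rewrite /wgt; apply: sigmoid_le; apply: ler_wpM2r; first by rewrite invr_ge0 ltW.
  apply: ler_pM; [exact: ltW | exact: ell_ge0 | exact: ub | exact: el].
apply: (mul_aux (ltW a0)).
apply: ler_pM; [by case/andP: (wgt_bnd r th eta b) | exact: ltW | exact: hw | exact: ub].
Qed.
Set Implicit Arguments. Unset Strict Implicit.

Lemma pi_lower (R : realType) (K : nat) (th m : 'I_K -> R) s :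
  (forall b, m b <= th s - th b) ->
  (\sum_(b < K) expR (- m b))^-1 <= softmax th s.
Proof.
move=> hm; have K0 : (0 < K)%N := leq_ltn_trans (leq0n s) (ltn_ord s).
set Q := \sum_(b < K) expR (th b - th s).
have Q0 : 0 < Q.
  rewrite /Q (bigD1 s) //= subrr expR0; apply: (lt_le_trans ltr01); rewrite lerDl.
  by apply: sumr_ge0 => i _; exact: ltW (expR_gt0 _).
have eS : \sum_(b < K) expR (th b) = expR (th s) * Q.
  rewrite /Q mulr_sumr; apply: eq_bigr => b _; rewrite -expRD; congr expR; ring.
have es : softmax th s = Q^-1.
  rewrite /softmax eS; field; apply/andP; split; exact: lt0r_neq0 (expR_gt0 _) || exact: lt0r_neq0.
have hQP : Q <= \sum_(b < K) expR (- m b).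
  apply: ler_sum => b _; rewrite ler_expR; have := hm b; lra.
rewrite es lef_pV2 ?posrE //; exact: lt_le_trans Q0 hQP.
Qed.

Lemma aux1 (R : realType) (e p : R) : 2 <= e -> 2 <= p -> 1 <= 2 * e * p.
Proof. by move=> he hp; nra. Qed.

Theorem corollary3 (R : realType) (K : nat) (r : 'I_K -> R) (eta : R)
    (theta0 : 'I_K -> R) :
  (0 < K)%N ->
  (forall a, 0 <= r a <= 1) ->
  injective r ->
  0 < eta ->
  exists2 alpha0 : R, 0 < alpha0 &
    forall alpha : R, 0 < alpha -> alpha <= alpha0 ->
      exists C : R, forall t : nat,
        delta alpha eta r theta0 t <= C / t.+1%:R.
Proof.
move=> K0 hr _ e0.
have [s [hV hs]] := @Vstar_arg R K r K0 (fun a => proj1 (andP (hr a))).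
exists 1 => // alpha a0 a1.
pose th := dg_theta alpha eta r theta0.
have thS : forall t, th t.+1 = step alpha eta r (th t) by [].
pose m := fun b => -1 - `|theta0 s - theta0 b|.
have inv : forall t b, m b <= th t s - th t b.
  elim=> [|t IH] b.
    rewrite /m /th /=; have := ler_norm (- (theta0 s - theta0 b)); rewrite normrN; lra.
  rewrite thS; have [h1 h2] := @step_D R K alpha eta r (th t) s b hr hs e0 a0.
  case: (lerP (th t s - th t b) 0) => h.
    exact: le_trans (IH b) (h2 h).
  have : m b <= -1 by rewrite /m; have := normr_ge0 (theta0 s - theta0 b); lra.
  lra.
pose P := \sum_(b < K) expR (- m b).
have E1 : 2 <= expR 1 :> R by have := @expR_ge1Dx R 1; lra.
have P1 : 2 <= P.
  rewrite /P (bigD1 s) //= /m subrr normr0 subr0 opprK.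
  apply: le_trans E1 _; rewrite lerDl.
  by apply: sumr_ge0 => i _; exact: ltW (expR_gt0 _).
have pil : forall t, P^-1 <= softmax (th t) s by move=> t; exact: pi_lower (inv t).
pose c := alpha / (2 * expR 1 * P).
have den0 : 0 < 2 * expR 1 * P by rewrite !mulr_gt0 // ?expR_gt0 //; lra.
have c0 : 0 < c by rewrite /c divr_gt0.
have c1 : c <= 1.
  rewrite /c ler_pdivrMr // mul1r; apply: le_trans a1 _.
  exact: aux1 E1 P1.
pose x := fun t => delta alpha eta r theta0 t.
have xe : forall t, x t = adv r (th t) s by move=> t; rewrite /x /delta hV /adv.
have xb : forall t, 0 <= x t <= 1.
  move=> t; rewrite xe; apply/andP; split; first exact: adv_s_ge0.
  by case/andP: (adv_bnd (th t) s hr).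
have xs : forall t, x t.+1 <= x t - c * x t ^+ 2.
  move=> t; rewrite !xe thS.
  have hv := @step_value R K alpha eta r (th t) s hr hs e0 a0 a1.
  set u := adv r (th t) s in hv *.
  have en : expR 1 != 0 :> R by exact: lt0r_neq0 (expR_gt0 _).
  have Pn : P != 0 by apply: lt0r_neq0; lra.
  have hc : c * u ^+ 2 <= softmax (th t) s * alpha * u ^+ 2 / (2 * expR 1).
    rewrite (_ : c * u ^+ 2 = (alpha * u ^+ 2 / (2 * expR 1)) * P^-1); last first.
      by rewrite /c; field; apply/andP; split.
    rewrite (_ : softmax (th t) s * alpha * u ^+ 2 / (2 * expR 1) =
       (alpha * u ^+ 2 / (2 * expR 1)) * softmax (th t) s); last by field.
    apply: ler_wpM2l; last exact: pil.
    apply: divr_ge0; last by apply: mulr_ge0 => //; exact: ltW (expR_gt0 _).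
    by apply: mulr_ge0; [exact: ltW | exact: sqr_ge0].
  rewrite /u /adv in hv hc *; lra.
exists c^-1 => t; exact: rec_bound.
Qed.
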